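(* Let $R$ be a local ring (i.e. $R/J(R)$ is a division ring), ${}_RM$ a finitely generated semisimple left $R$-module with $d=\dim_R(M)$, $\varphi:M\to M$ a nilpotent $R$-endomorphism with index of nilpotency $n$ ($\varphi^n=0\ne\varphi^{n-1}$), and $\sigma\in\mathrm{Hom}_R(M,M)$ arbitrary. Then the following are equivalent: (1) $C_\varphi\subseteq C_\sigma$; (2) there exist an $R$-generating set $\{y_j\in M\mid1\le j\le d\}$ of ${}_RM$ and elements $a_1,\dots,a_n\in R$ such that \[a_1\psi(y_j)+a_2\varphi(\psi(y_j))+\cdots+a_n\varphi^{n-1}(\psi(y_j))=\sigma(\psi(y_j))\] for all $1\le j\le d$ and all $\psi\in C_\varphi$.
   Context: For $\alpha\in\mathrm{Hom}_R(M,M)$, $C_\alpha=\{\psi\in\mathrm{Hom}_R(M,M)\mid\psi\circ\alpha=\alpha\circ\psi\}$. $J(R)$ is the Jacobson radical and $\dim_R$ is composition length. *)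

(* Defs.v *)
From HB Require Import structures.
From mathcomp Require Import all_boot all_order all_algebra.
Set Implicit Arguments. Unset Strict Implicit. Unset Printing Implicit Defensive.
Import GRing.Theory.
Local Open Scope ring_scope.

Section RingDefs.
Variable R : nzRingType.

Definition left_ideal (I : R -> Prop) : Prop :=
  [/\ I 0, (forall x y, I x -> I y -> I (x + y)) & (forall r x, I x -> I (r * x))].

Definition maximal_left_ideal (I : R -> Prop) : Prop :=
  [/\ left_ideal I, ~ I 1 &
      forall K : R -> Prop, left_ideal K -> ~ K 1 ->
        (forall x, I x -> K x) -> forall x, K x -> I x].

Definition jacobson (x : R) : Prop :=
  forall I, maximal_left_ideal I -> I x.

(* R is local: R / J(R) is a division ring, i.e. it is nonzero and every
   nonzero class has a two-sided inverse in R / J(R). *)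
Definition local_ring : Prop :=
  ~ jacobson 1 /\
  forall x, ~ jacobson x ->
    exists y, jacobson (y * x - 1) /\ jacobson (x * y - 1).
End RingDefs.

Section ModDefs.
Variables (R : nzRingType) (M : lmodType R).

Definition submodule (S : M -> Prop) : Prop :=
  [/\ S 0, (forall x y, S x -> S y -> S (x + y)) & (forall a x, S x -> S (a *: x))].

Definition generates (k : nat) (y : 'I_k -> M) : Prop :=
  forall m : M, exists c : 'I_k -> R, m = \sum_(j < k) c j *: y j.

Definition fin_generated : Prop := exists k (y : 'I_k -> M), generates y.

Definition semisimple : Prop :=
  forall S, submodule S -> exists T, [/\ submodule T,
    (forall x, S x -> T x -> x = 0) &
    (forall m, exists s t, [/\ S s, T t & m = s + t])].

Definition comp_series (d : nat) (S : nat -> M -> Prop) : Prop :=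
  [/\ (forall i, submodule (S i)),
      (forall x, S 0%N x <-> x = 0),
      (forall x, S d x) &
      (forall i, (i < d)%N ->
        [/\ (forall x, S i x -> S i.+1 x),
            (exists x, S i.+1 x /\ ~ S i x) &
            (forall T, submodule T -> (forall x, S i x -> T x) ->
               (forall x, T x -> S i.+1 x) ->
               (forall x, T x -> S i x) \/ (forall x, S i.+1 x -> T x))])].

(* dim_R M = d : composition length *)
Definition comp_length (d : nat) : Prop := exists S, comp_series d S.

Definition centralizer (alpha : {linear M -> M}) (psi : {linear M -> M}) : Prop :=
  forall m, psi (alpha m) = alpha (psi m).
End ModDefs.

(* Main.v *)
Require Import Defs.
From HB Require Import structures.
From mathcomp Require Import all_boot all_order all_algebra.
From Stdlib Require Import Classical ClassicalEpsilon Lia.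
From mathcomp Require Import zify.
Import GRing.Theory.
Local Open Scope ring_scope.

Definition annM (R : nzRingType) (M : lmodType R) (r : R) : Prop :=
  forall m : M, r *: m = 0.

Lemma annM_eq (R : nzRingType) (M : lmodType R) (r r' : R) (m : M) :
  @annM _ M (r - r') -> r *: m = r' *: m.
Proof. by move=> /(_ m); rewrite scalerBl => /eqP; rewrite subr_eq0 => /eqP. Qed.

Lemma iter_lin0 (R : nzRingType) (M : lmodType R) (f : {linear M -> M}) k :
  iter k f 0 = 0.
Proof. by elim: k => //= k ->; rewrite linear0. Qed.

Lemma iter_linD (R : nzRingType) (M : lmodType R) (f : {linear M -> M}) k u v :
  iter k f (u + v) = iter k f u + iter k f v.
Proof. by elim: k => //= k ->; rewrite linearD. Qed.

Lemma iter_linZ (R : nzRingType) (M : lmodType R) (f : {linear M -> M}) k a u :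
  iter k f (a *: u) = a *: iter k f u.
Proof. by elim: k => //= k ->; rewrite linearZ. Qed.

Lemma iter_linN (R : nzRingType) (M : lmodType R) (f : {linear M -> M}) k u :
  iter k f (- u) = - iter k f u.
Proof. by rewrite -scaleN1r iter_linZ scaleN1r. Qed.

Lemma iter_linsum (R : nzRingType) (M : lmodType R) (f : {linear M -> M}) k
   (I : finType) (F : I -> M) :
  iter k f (\sum_i F i) = \sum_i iter k f (F i).
Proof.
elim/big_rec2: _ => [|i y1 y2 _ <-]; first exact: iter_lin0.
exact: iter_linD.
Qed.

Lemma iter_comm (R : nzRingType) (M : lmodType R) (phi psi : {linear M -> M}) k m :
  centralizer phi psi -> psi (iter k phi m) = iter k phi (psi m).
Proof. by move=> H; elim: k => //= k <-; rewrite H. Qed.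

Lemma jac_kills (R : nzRingType) (M : lmodType R) d S :
  @comp_series R M d S -> semisimple M ->
  forall j, jacobson j -> forall m : M, j *: m = 0.
Proof.
move=> [Hsub H0 Hd Hst] Hss j Hj.
suff: forall i, (i <= d)%N -> forall x, S i x -> j *: x = 0.
  by move=> H m; apply: (H d) => //.
elim=> [|i IH] Hi x Sx.
  by move/H0: Sx => ->; rewrite scaler0.
have lid : (i < d)%N by [].
have [Hinc _ Hmax] := Hst i lid.
have [T [subT disj dec]] := Hss _ (Hsub i).
have [Ti0 TiD TiZ] := Hsub i; have [Ti10 Ti1D Ti1Z] := Hsub i.+1.
have [TT0 TTD TTZ] := subT.
have [s [t [Ss Tt Ex]]] := dec x.
rewrite Ex.
rewrite scalerDr (IH (ltnW Hi) _ Ss) add0r.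
have St : S i.+1 t.
  have -> : t = (s + t) + (-1) *: s by rewrite scaleN1r addrAC subrr add0r.
  apply: Ti1D; first by rewrite -Ex.
  by apply: Ti1Z; apply: Hinc.
have [->|tn0] := eqVneq t 0; first by rewrite scaler0.
apply: (Hj (fun r => r *: t = 0)).
split.
- split; first by rewrite scale0r.
  + by move=> a b Ha Hb; rewrite scalerDl Ha Hb addr0.
  + by move=> r a Ha; rewrite -scalerA Ha scaler0.
- by rewrite scale1r; apply/eqP.
move=> K [K0 KD KZ] K1 IK a Ka.
pose V := fun v => exists s k, [/\ S i s, K k & v = s + k *: t].
have subV : submodule V.
  split.
  - by exists 0, 0; split => //; rewrite scale0r addr0.
  - move=> u v [s1 [k1 [? ? ->]]] [s2 [k2 [? ? ->]]].
    exists (s1 + s2), (k1 + k2); split; [exact: TiD|exact: KD|].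
    by rewrite scalerDl addrACA.
  - move=> b u [s1 [k1 [? ? ->]]]; exists (b *: s1), (b * k1); split.
    + exact: TiZ.
    + exact: KZ.
    + by rewrite scalerDr scalerA.
have SV : forall v, S i v -> V v.
  by move=> v Sv; exists v, 0; split => //; rewrite scale0r addr0.
have VS : forall v, V v -> S i.+1 v.
  move=> v [s1 [k1 [Ss1 _ ->]]]; apply: Ti1D; first exact: Hinc.
  exact: Ti1Z.
have [H1|H2] := Hmax V subV SV VS.
- apply: disj; first by apply: H1; exists 0, a; split => //; rewrite add0r.
  exact: TTZ.
- exfalso; apply: K1.
  have [s' [k [Ss' Kk Et]]] := H2 t St.
  have Hs' : s' = (1 - k) *: t by rewrite scalerBl scale1r {1}Et addrK.
  have : (1 - k) *: t = 0.
    apply: disj; first by rewrite -Hs'.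
    rewrite scalerBl scale1r -scaleN1r; apply: (TTD); first exact: Tt.
    by apply: (TTZ); apply: (TTZ).
  move/IK => K1k.
  by have := KD _ _ K1k Kk; rewrite subrK.
Qed.

Lemma key_ann (R : nzRingType) (M : lmodType R) (z : M) (r : R) :
  local_ring R -> (forall j, jacobson j -> forall m : M, j *: m = 0) ->
  z != 0 -> r *: z = 0 -> @annM _ M r.
Proof.
move=> [_ Hloc] HJ zn0 rz m.
have [Jr|nJr] := classic (jacobson r); first exact: HJ.
exfalso; have [y [Hy _]] := Hloc r nJr.
have := HJ _ Hy z; rewrite scalerBl -scalerA rz scaler0 scale1r sub0r.
by move/eqP; rewrite oppr_eq0 (negPf zn0).
Qed.

Lemma iter_high (R : nzRingType) (M : lmodType R) (phi : {linear M -> M}) n a m :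
  (forall m : M, iter n phi m = 0) -> (n <= a)%N -> iter a phi m = 0.
Proof.
move=> Hn le; rewrite -(subnK le) iterD Hn; exact: iter_lin0.
Qed.

Lemma indep (R : nzRingType) (M : lmodType R) (phi : {linear M -> M}) n' (m0 : M) :
  (forall m : M, iter n'.+1 phi m = 0) ->
  (forall r, r *: iter n' phi m0 = 0 -> @annM _ M r) ->
  forall c : 'I_n'.+1 -> R, \sum_i c i *: iter i phi m0 = 0 ->
  forall i, @annM _ M (c i).
Proof.
move=> Hn Hk c Hs.
suff: forall k, forall i : 'I_n'.+1, (i < k)%N -> @annM _ M (c i).
  by move=> H i; apply: (H i.+1).
elim=> [//|k IH] i; rewrite ltnS leq_eqVlt => /orP [/eqP Eik|]; last exact: IH.
apply: Hk.
have := congr1 (iter (n' - k) phi) Hs.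
rewrite iter_lin0 iter_linsum (bigD1 i) //= big1 ?addr0.
  by rewrite iter_linZ -iterD Eik subnK // -Eik -ltnS.
move=> j nji; rewrite iter_linZ -iterD.
case: (ltngtP j i) => [lt|gt|eq].
- by apply: IH; rewrite -Eik.
- rewrite (@iter_high _ _ phi n'.+1 _ _ Hn) ?scaler0 //.
  move: gt (ltn_ord i); rewrite -Eik; lia.
- by move: nji; rewrite -(inj_eq val_inj) /= eq eqxx.
Qed.

Lemma gen_exists (R : nzRingType) (M : lmodType R) d S :
  @comp_series R M d S -> exists y : 'I_d -> M, generates y.
Proof.
move=> [Hsub H0 Hd Hst].
have Y : forall j : 'I_d, {x | S j.+1 x /\ ~ S j x}.
  move=> j; apply: constructive_indefinite_description.
  by have [_ H _] := Hst j (ltn_ord j).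
exists (fun j => sval (Y j)).
suff: forall i, (i <= d)%N -> forall x, S i x -> exists c : 'I_d -> R,
   (forall j : 'I_d, (i <= j)%N -> c j = 0) /\ x = \sum_j c j *: sval (Y j).
  by move=> H m; have [c [_ ->]] := H d (leqnn d) m (Hd m); exists c.
elim=> [|i IH] Hi x Sx.
  exists (fun _ => 0); split => //; move/H0: Sx => ->.
  by rewrite big1 // => j _; rewrite scale0r.
pose i0 : 'I_d := Ordinal Hi.
have [Hinc _ Hmax] := Hst i Hi.
have [Ti0 TiD TiZ] := Hsub i; have [Ti10 Ti1D Ti1Z] := Hsub i.+1.
have [Yi1 Yni] := svalP (Y i0).
pose V := fun v => exists s r, S i s /\ v = s + r *: sval (Y i0).
have subV : submodule V.
  split.
  - by exists 0, 0; split => //; rewrite scale0r addr0.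
  - move=> u v [s1 [k1 [? ->]]] [s2 [k2 [? ->]]].
    exists (s1 + s2), (k1 + k2); split; first exact: (TiD).
    by rewrite scalerDl addrACA.
  - move=> b u [s1 [k1 [? ->]]]; exists (b *: s1), (b * k1); split.
    + exact: (TiZ).
    + by rewrite scalerDr scalerA.
have SV : forall v, S i v -> V v.
  by move=> v Sv; exists v, 0; split => //; rewrite scale0r addr0.
have VS : forall v, V v -> S i.+1 v.
  move=> v [s1 [k1 [Ss1 ->]]]; apply: (Ti1D); first exact: Hinc.
  exact: (Ti1Z).
have [H1|H2] := Hmax V subV SV VS.
  exfalso; apply: Yni; apply: H1; exists 0, 1; split => //.
  by rewrite scale1r add0r.
have [s [r [Ss ->]]] := H2 x Sx.
have [c [Hc ->]] := IH (ltnW Hi) s Ss.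
exists (fun j => c j + (if j == i0 then r else 0)); split.
  move=> j lej; rewrite Hc ?(ltnW lej) // ifF ?addr0 //.
  apply/negP => /eqP Ej; move: lej; by rewrite Ej /= ltnn.
rewrite [in RHS](eq_bigr (fun j => c j *: sval (Y j) + (if j == i0 then r else 0) *: sval (Y j))); last by move=> j _; rewrite scalerDl.
rewrite big_split /= [X in _ = _ + X](bigD1 i0) //= eqxx [X in _ = _ + (_ + X)]big1 ?addr0 //.
by move=> j /negPf ->; rewrite scale0r.
Qed.

Theorem theorem4p10 (R : nzRingType) (M : lmodType R) (d n : nat)
  (phi sigma : {linear M -> M}) :
  local_ring R ->
  fin_generated M -> semisimple M -> comp_length M d ->
  (forall m : M, iter n phi m = 0) -> (exists m : M, iter n.-1 phi m != 0) ->
  ((forall psi : {linear M -> M}, centralizer phi psi -> centralizer sigma psi)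
   <->
   (exists (y : 'I_d -> M) (a : 'I_n -> R), generates y /\
      forall (j : 'I_d) (psi : {linear M -> M}), centralizer phi psi ->
        \sum_(i < n) a i *: iter i phi (psi (y j)) = sigma (psi (y j)))).
Proof.
move=> Hloc _ Hss [S Hcs] Hn [m0 Hm0].
split; last first.
  move=> [y [a [Hgen Hid]]] psi Hpsi m.
  have Hs : forall j, sigma (y j) = \sum_(i < n) a i *: iter i phi (y j).
    by move=> j; have := Hid j idfun (fun _ => erefl) => /= <-.
  have [c ->] := Hgen m.
  rewrite !linear_sum /=; apply: eq_bigr => j _.
  rewrite !linearZ /= Hs -(Hid j psi Hpsi) linear_sum; congr (_ *: _).
  by apply: eq_bigr => i _; rewrite linearZ /= (@iter_comm _ _ phi psi _ _ Hpsi).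
move=> H1.
have HJ := @jac_kills _ _ _ _ Hcs Hss.
case: n Hn Hm0 => [|n'] Hn Hm0; first by move: Hm0; rewrite /= (Hn m0 : m0 = 0) eqxx.
rewrite /= in Hm0.
have Hk : forall r, r *: iter n' phi m0 = 0 -> @annM _ M r.
  by move=> r; apply: (@key_ann _ _ _ r Hloc HJ Hm0).
pose W := fun v : M => exists c : 'I_n'.+1 -> R, v = \sum_i c i *: iter i phi m0.
have subW : submodule W.
  split.
  - by exists (fun _ => 0); rewrite big1 // => i _; rewrite scale0r.
  - move=> u v [c1 ->] [c2 ->]; exists (fun i => c1 i + c2 i).
    by rewrite -big_split; apply: eq_bigr => i _; rewrite scalerDl.
  - move=> b u [c1 ->]; exists (fun i => b * c1 i).
    by rewrite scaler_sumr; apply: eq_bigr => i _; rewrite scalerA.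
have [C [[C0 CD CZ] disj dec]] := Hss W subW.
have coefP : forall v, {c : 'I_n'.+1 -> R |
     exists t, C t /\ v = \sum_i c i *: iter i phi m0 + t}.
  move=> v; apply: constructive_indefinite_description.
  by have [s [t [[c ->] Ct ->]]] := dec v; exists c, t.
pose coef v := sval (coefP v).
have coefU : forall (v : M) (c : 'I_n'.+1 -> R) (t : M), C t -> v = \sum_i c i *: iter i phi m0 + t ->
    forall i, @annM _ M (coef v i - c i).
  move=> v c t Ct Ev.
  have [t' [Ct' Ev']] := svalP (coefP v).
  apply: (@indep _ _ phi n' m0 Hn Hk (fun i => coef v i - c i)).
  set A := \sum_i coef v i *: iter i phi m0 in Ev'.
  set B := \sum_i c i *: iter i phi m0 in Ev.
  have Heq : A + t' = B + t by rewrite -Ev' -Ev.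
  have E : \sum_i (coef v i - c i) *: iter i phi m0 = t - t'.
    rewrite (eq_bigr (fun i => coef v i *: iter i phi m0 - c i *: iter i phi m0));
      last by move=> i _; rewrite scalerBl.
    rewrite sumrB -/A -/B -(addrK t' A) Heq addrAC (addrC B t) addrK //.
  apply: disj; first by exists (fun i => coef v i - c i).
  by rewrite E; apply: CD => //; rewrite -scaleN1r; apply: CZ.
pose rho v := coef v ord_max.
have rhoL : forall a u v, @annM _ M (rho (a *: u + v) - (a * rho u + rho v)).
  move=> a u v.
  have [tu [Ctu Eu]] := svalP (coefP u); have [tv [Ctv Ev]] := svalP (coefP v).
  apply: (coefU _ (fun i => a * coef u i + coef v i) (a *: tu + tv)).
    by apply: CD => //; apply: CZ.
  rewrite {1}Eu {1}Ev.
  rewrite [in RHS](eq_bigr (fun i => a *: (coef u i *: iter i phi m0) + coef v i *: iter i phi m0));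
    last by move=> i _; rewrite scalerDl scalerA.
  by rewrite big_split /= -scaler_sumr scalerDr addrACA.
have rho0 : forall k, (k < n'.+1)%N -> forall i : 'I_n'.+1,
    @annM _ M (coef (iter k phi m0) i - (if (i == k :> nat) then 1 else 0)).
  move=> k Hk' i; apply: (coefU _ (fun i : 'I_n'.+1 => if (i == k :> nat) then 1 else 0) 0 C0); rewrite addr0.
  rewrite (bigD1 (Ordinal Hk')) //= eqxx scale1r big1 ?addr0 //.
  move=> j nj; rewrite ifF ?scale0r //; apply/negP => /eqP Ej; move: nj.
  by rewrite -(inj_eq val_inj) /= Ej eqxx.
have rhoZ : @annM _ M (rho 0).
  have := coefU 0 (fun _ => 0) 0 C0; rewrite big1 ?addr0 => [H|i _]; last exact: scale0r.
  by have := H erefl ord_max; rewrite subr0.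
pose psi_f (x v : M) := \sum_(i < n'.+1) rho (iter i phi v) *: iter (n' - i) phi x.
have psiL : forall x a u v, psi_f x (a *: u + v) = a *: psi_f x u + psi_f x v.
  move=> x a u v; rewrite /psi_f scaler_sumr -big_split; apply: eq_bigr => i _.
  rewrite iter_linD iter_linZ (@annM_eq _ _ _ _ _ (rhoL _ _ _)) scalerDl scalerA //.
pose Psi x : {linear M -> M} :=
  HB.pack (psi_f x) (GRing.isLinear.Build R M M *:%R (psi_f x) (psiL x)).
have PsiE : forall x v, Psi x v = psi_f x v by [].
have comm : forall x, centralizer phi (Psi x).
  move=> x v; rewrite !PsiE /psi_f big_ord_recr /= [in RHS]linear_sum big_ord_recl /=.
  rewrite -iterSr Hn (@annM_eq _ _ _ 0 _ (_ : @annM _ M (rho 0 - 0))) ?subr0 //.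
  rewrite scale0r addr0 linearZ /= subn0 -iterS Hn scaler0 add0r.
  apply: eq_bigr => i _; rewrite linearZ /= -iterSr /bump leq0n add1n add0n -!iterS subnSK //.
have PsiM0 : forall x, Psi x m0 = x.
  move=> x; rewrite PsiE /psi_f big_ord_recr /= big1 ?add0r.
    have := rho0 n' (ltnSn n') ord_max; rewrite /= eqxx => /annM_eq ->.
    by rewrite subnn scale1r.
  move=> i _; have := rho0 i (ltn_trans (ltn_ord i) (ltnSn n')) ord_max.
  rewrite /= ifF => [/annM_eq ->|]; first by rewrite scale0r.
  by apply/negP => /eqP Ei; have := ltn_ord i; rewrite -Ei ltnn.
pose cc i := rho (iter i phi (sigma m0)).
have E0 : sigma m0 = \sum_(i < n'.+1) cc i *: iter (n' - i) phi m0.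
  by rewrite -{1}(PsiM0 m0) -(H1 _ (comm m0)).
have Hs0 : forall x, sigma x = \sum_(i < n'.+1) cc i *: iter (n' - i) phi x.
  move=> x; rewrite -{1}(PsiM0 x) -(H1 _ (comm x)) E0 linear_sum.
  apply: eq_bigr => i _; rewrite linearZ /=.
  by rewrite -PsiE (@iter_comm _ _ phi (Psi x) _ _ (comm x)) PsiM0.
have [y Hy] := @gen_exists _ _ _ _ Hcs.
exists y, (fun i => cc (rev_ord i)); split => // j psi _.
rewrite Hs0 (reindex_inj rev_ord_inj) /=; apply: eq_bigr => i _.
have Hi := ltn_ord i; congr (cc _ *: iter _ phi _); lia.
Qed.
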